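(* Let $G=(V,E)$ be a finite graph and let $m:V\to\mathbb{Z}_{>0}$ be positive integer weights. Let $\tilde G$ be the graph with vertex set $\{(\alpha,a):\alpha\in V,\ 1\le a\le m_\alpha\}$, in which $(\alpha,a)$ and $(\beta,b)$ are adjacent iff $(\alpha,\beta)\in E$. Then $$\Psi(\tilde G)=\Psi_m(G).$$
   Context: For a finite graph $G=(V,E)$, a ''$G$-representation'' is a family $(O_\alpha)_{\alpha\in V}$ of Hermitian operators on a Hilbert space such that: - $O_\alpha^2=1$ for all $\alpha$; - $O_\alpha O_\beta=-O_\beta O_\alpha$ if $(\alpha,\beta)\in E$; - $O_\alpha O_\beta=O_\beta O_\alpha$ if $\alpha\ne\beta$ and $(\alpha,\beta)\notin E$. For positive weights $m_\alpha$, the weighted $\Psi$ function $\Psi_m(G)$ is the supremum of $\bigl\|\sum_\alpha K_\alpha O_\alpha\bigr\|^2$ over all $G$-representations and all real $(K_\alpha)$ with $\sum_\alpha K_\alpha^2/m_\alpha=1$; here $\|\cdot\|$ is the operator norm. The invariant $\Psi(G)$ is $\Psi_m(G)$ with all $m_\alpha=1$, i.e. the supremum of $\|\sum_\alpha J_\alpha O_\alpha\|^2$ over $G$-representations and real unit vectors $\vec J$. *)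

(* Defs.v *)
From HB Require Import structures.
From mathcomp Require Import all_boot all_order all_algebra.
From mathcomp Require Import classical_sets reals.
From mathcomp.real_closed Require Import complex.
Set Implicit Arguments. Unset Strict Implicit. Unset Printing Implicit Defensive.
Import Order.TTheory GRing.Theory Num.Theory.
Local Open Scope ring_scope.
Local Open Scope classical_set_scope.

Record hilbert (R : realType) : Type := Hilbert {
  hcarrier :> lmodType R[i];
  hinner : hcarrier -> hcarrier -> R[i];
  hinnerDl : forall (a : R[i]) (x y z : hcarrier),
      hinner (a *: x + y) z = a * hinner x z + hinner y z;
  hinnerC : forall x y : hcarrier, hinner y x = conjc (hinner x y);
  hinner_ge0 : forall x : hcarrier, 0 <= hinner x x;
  hinner_eq0 : forall x : hcarrier, hinner x x = 0 -> x = 0;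
  hcomplete : forall u : nat -> hcarrier,
      (forall eps : R, 0 < eps -> exists N : nat, forall m n : nat,
          (N <= m)%N -> (N <= n)%N ->
          Num.sqrt (complex.Re (hinner (u m - u n) (u m - u n))) < eps) ->
      exists l : hcarrier, forall eps : R, 0 < eps -> exists N : nat,
          forall n : nat, (N <= n)%N ->
          Num.sqrt (complex.Re (hinner (u n - l) (u n - l))) < eps
}.

Section Defs.
Variable R : realType.

Definition hnorm (H : hilbert R) (x : H) : R :=
  Num.sqrt (complex.Re (hinner x x)).

Definition opnorm (H : hilbert R) (T : H -> H) : R :=
  sup [set hnorm (T x) | x in [set x : H | hnorm x <= 1]].

Definition is_grep (V : finType) (E : rel V) (H : hilbert R) (O : V -> H -> H) :=
  [/\ (forall a (c : R[i]) (x y : H), O a (c *: x + y) = c *: O a x + O a y),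
      (forall a (x y : H), hinner (O a x) y = hinner x (O a y)),
      (forall a (x : H), O a (O a x) = x),
      (forall a b, E a b -> forall x : H, O a (O b x) = - O b (O a x)) &
      (forall a b, a != b -> ~~ E a b -> forall x : H, O a (O b x) = O b (O a x))].

Definition Psi_m (V : finType) (E : rel V) (m : V -> R) : R :=
  sup [set r : R | exists (H : hilbert R) (O : V -> H -> H) (K : V -> R),
         [/\ is_grep E O,
             \sum_(a : V) K a ^+ 2 / m a = 1 &
             r = opnorm (fun x : H => \sum_(a : V) (K a)%:C%C *: O a x) ^+ 2]].

Definition Psi (V : finType) (E : rel V) : R := Psi_m E (fun _ => 1).

End Defs.

(* The blown-up graph G~: vertices (alpha, a) with a < m alpha
   (0-based copy index), adjacency inherited from E. *)
Definition blowup_vertex (V : finType) (m : V -> nat) : finType :=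
  {alpha : V & 'I_(m alpha)}.
Definition blowup_rel (V : finType) (E : rel V) (m : V -> nat) :
  rel (blowup_vertex m) := fun x y => E (tag x) (tag y).
Arguments blowup_vertex : clear implicits.
Arguments blowup_rel : clear implicits.
Arguments Psi : clear implicits.
Arguments Psi_m : clear implicits.

(* Main.v *)
Require Import Defs.
From HB Require Import structures.
From mathcomp Require Import all_boot all_order all_algebra.
From mathcomp Require Import classical_sets reals.
From mathcomp.real_closed Require Import complex.
From mathcomp Require Import boolp.
From mathcomp Require Import ring lra.
Import Order.TTheory GRing.Theory Num.Theory.
Local Open Scope ring_scope.
Set Implicit Arguments. Unset Strict Implicit. Unset Printing Implicit Defensive.

Section Hilb.
Variable R : realType.
Variable H : hilbert R.
Implicit Types x y z : H.

Lemma hinnerD x y z : hinner (x + y) z = hinner x z + hinner y z.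
Proof. by have := hinnerDl 1 x y z; rewrite scale1r mul1r. Qed.

Lemma hinner0 z : hinner 0 z = 0.
Proof.
have h := hinnerD 0 0 z; rewrite addr0 in h.
by apply: (addrI (hinner 0 z)); rewrite addr0 -h.
Qed.

Lemma hinnerZ a x z : hinner (a *: x) z = a * hinner x z.
Proof. by have := hinnerDl a x 0 z; rewrite addr0 hinner0 addr0. Qed.

Definition B x y := complex.Re (hinner x y).

Lemma ReD (u v : R[i]) : complex.Re (u + v) = complex.Re u + complex.Re v.
Proof. by case: u; case: v. Qed.

Lemma ReM (a : R) (u : R[i]) : complex.Re ((a%:C)%C * u) = a * complex.Re u.
Proof. by case: u => p q /=; rewrite mul0r subr0. Qed.

Lemma ReJ (u : R[i]) : complex.Re (conjc u) = complex.Re u.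
Proof. by case: u. Qed.

Lemma BDl x y z : B (x + y) z = B x z + B y z.
Proof. by rewrite /B hinnerD ReD. Qed.

Lemma B0l z : B 0 z = 0.
Proof. by rewrite /B hinner0. Qed.

Lemma BZl a x z : B ((a%:C)%C *: x) z = a * B x z.
Proof. by rewrite /B hinnerZ ReM. Qed.

Lemma Bsym x y : B x y = B y x.
Proof. by rewrite /B hinnerC ReJ. Qed.

Lemma BNl x z : B (- x) z = - B x z.
Proof.
have -> : - x = ((-1 : R)%:C)%C *: x.
  by rewrite rmorphN rmorph1 scaleN1r.
by rewrite BZl mulN1r.
Qed.

Lemma BDr x y z : B z (x + y) = B z x + B z y.
Proof. by rewrite !(Bsym z) BDl. Qed.
Lemma BZr a x z : B z ((a%:C)%C *: x) = a * B z x.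
Proof. by rewrite !(Bsym z) BZl. Qed.
Lemma BNr x z : B z (- x) = - B z x.
Proof. by rewrite !(Bsym z) BNl. Qed.
Lemma B0r z : B z 0 = 0.
Proof. by rewrite Bsym B0l. Qed.

Lemma Bge0 x : 0 <= B x x.
Proof. by have := hinner_ge0 x; rewrite lecE => /andP[]. Qed.

Lemma Bsuml (I : finType) (P : pred I) (f : I -> H) z :
  B (\sum_(i | P i) f i) z = \sum_(i | P i) B (f i) z.
Proof.
by apply: (big_morph (fun x => B x z)) => [x y|]; rewrite ?BDl ?B0l.
Qed.

Lemma BsZ a x : B ((a%:C)%C *: x) ((a%:C)%C *: x) = a ^+ 2 * B x x.
Proof. by rewrite BZl BZr mulrA expr2. Qed.

Lemma jensen (I : finType) (P : pred I) (l : I -> R) (v : I -> H) :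
  (forall i, P i -> 0 <= l i) -> \sum_(i | P i) l i = 1 ->
  B (\sum_(i | P i) ((l i)%:C)%C *: v i) (\sum_(i | P i) ((l i)%:C)%C *: v i)
    <= \sum_(i | P i) l i * B (v i) (v i).
Proof.
move=> l0 l1; set u := \sum_(i | P i) _.
have key : \sum_(i | P i) l i * B (v i - u) (v i - u) =
   \sum_(i | P i) l i * B (v i) (v i) - B u u.
  have e i : B (v i - u) (v i - u) = B (v i) (v i) - 2%:R * B (v i) u + B u u.
    rewrite !BDl !BDr !BNl !BNr opprK (Bsym u (v i)).
    by rewrite mulr2n mulrDl mul1r; lra.
  under eq_bigr => i _ do rewrite e mulrDr.
  rewrite big_split /= -big_distrl /= l1 mul1r.
  have -> : \sum_(i | P i) l i * (B (v i) (v i) - 2%:R * B (v i) u) =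
    \sum_(i | P i) l i * B (v i) (v i) - 2%:R * B u u.
    have hu : B u u = \sum_(i | P i) l i * B (v i) u.
      by rewrite {1}/u Bsuml; apply: eq_bigr => i _; rewrite BZl.
    rewrite hu big_distrr /= -sumrB; apply: eq_bigr => i _.
    by rewrite mulrBr; congr (_ - _); rewrite mulrA mulrCA mulrA.
  by rewrite mulr2n mulrDl mul1r; lra.
suff : 0 <= \sum_(i | P i) l i * B (v i) (v i) - B u u by rewrite subr_ge0.
rewrite -key; apply: sumr_ge0 => i Pi; apply: mulr_ge0; [exact: l0|exact: Bge0].
Qed.

Lemma Bsumr (I : finType) (P : pred I) (f : I -> H) z :
  B z (\sum_(i | P i) f i) = \sum_(i | P i) B z (f i).
Proof. by rewrite Bsym Bsuml; apply: eq_bigr => i _; rewrite Bsym. Qed.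

Lemma B2le a b : 2%:R * B a b <= B a a + B b b.
Proof.
have := Bge0 (a - b); rewrite !BDl !BDr !BNl !BNr opprK (Bsym b a).
by rewrite mulr2n mulrDl mul1r; lra.
Qed.

Lemma cardxT (I : finType) : #|(fun _ : I => true)| = #|I|.
Proof. by apply: eq_card. Qed.

Lemma sumbound (I : finType) (v : I -> H) :
  B (\sum_i v i) (\sum_i v i) <= #|I|%:R * \sum_i B (v i) (v i).
Proof.
rewrite Bsuml.
under eq_bigr => i _ do rewrite Bsumr.
have h : forall i j : I, B (v i) (v j) <= (B (v i) (v i) + B (v j) (v j)) / 2%:R.
  move=> i j; rewrite ler_pdivlMr ?ltr0n // mulrC; exact: B2le.
apply: le_trans (_ : \sum_i \sum_j (B (v i) (v i) + B (v j) (v j)) / 2%:R <= _).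
  by apply: ler_sum => i _; apply: ler_sum => j _; exact: h.
under eq_bigr => i _ do rewrite -big_distrl /= big_split /= sumr_const.
rewrite -big_distrl /= big_split /= sumr_const.
have hc : #|(fun _ : I => true)| = #|I| by apply: eq_card.
by rewrite hc sumrMnl -mulr2n -[_ *+ 2]mulr_natr mulfK ?pnatr_eq0 // mulr_natl.
Qed.


Lemma hnormE x : hnorm x = Num.sqrt (B x x).
Proof. by []. Qed.

Lemma ballE x : (hnorm x <= 1) = (B x x <= 1).
Proof.
have := @ler_sqrt _ (B x x) 1 ler01.
by rewrite sqrtr1 hnormE.
Qed.

Lemma opnorm_ub (S : H -> H) c :
  (forall y, B y y <= 1 -> B (S y) (S y) <= c) ->
  forall y, B y y <= 1 -> hnorm (S y) <= opnorm S.
Proof.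
move=> hS y hy.
have c0 : 0 <= c by apply: le_trans (hS 0 _); [exact: Bge0 | rewrite B0l ler01].
apply: sup_upper_bound; last by exists y => //=; rewrite ballE.
split; first by exists (hnorm (S y)), y => //=; rewrite ballE.
exists (Num.sqrt c) => r [x /= hx <-].
by rewrite hnormE ler_sqrt // hS // -ballE.
Qed.


Lemma opnorm_sq_le (S : H -> H) c :
  (forall y, B y y <= 1 -> B (S y) (S y) <= c) -> opnorm S ^+ 2 <= c.
Proof.
move=> hS.
have c0 : 0 <= c by apply: le_trans (hS 0 _); [exact: Bge0 | rewrite B0l ler01].
have hle : opnorm S <= Num.sqrt c.
  apply: ge_sup; first by exists (hnorm (S 0)), 0 => //=; rewrite ballE B0l ler01.
  by move=> r [x /= hx <-]; rewrite hnormE ler_sqrt // hS // -ballE.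
have h0 : 0 <= opnorm S.
  have hb0 : B 0 0 <= 1 by rewrite B0l ler01.
  have := opnorm_ub hS hb0; apply: le_trans; exact: sqrtr_ge0.
rewrite -(sqr_sqrtr c0) expr2 [X in _ <= X]expr2.
by apply: ler_pM.
Qed.

Lemma opnorm_ge (S : H -> H) c :
  (forall y, B y y <= 1 -> B (S y) (S y) <= c) ->
  forall y, B y y <= 1 -> B (S y) (S y) <= opnorm S ^+ 2.
Proof.
move=> hS y hy; have h := opnorm_ub hS hy.
rewrite -(sqr_sqrtr (Bge0 (S y))) expr2 [X in _ <= X]expr2.
by apply: ler_pM => //; exact: sqrtr_ge0.
Qed.

Lemma B_inv (O : H -> H) y :
  (forall x z, hinner (O x) z = hinner x (O z)) -> (forall x, O (O x) = x) ->
  B (O y) (O y) = B y y.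
Proof. by move=> ha hi; rewrite /B ha hi. Qed.
End Hilb.

Lemma term_le_sum (R : realType) (I : finType) (P : pred I) (F : I -> R) i :
  (forall j, P j -> 0 <= F j) -> P i -> F i <= \sum_(j | P j) F j.
Proof.
move=> h Pi; rewrite (bigD1 i) //= lerDl; apply: sumr_ge0 => j /andP[Pj _].
exact: h.
Qed.

Lemma sum_const_n (R : realType) (I : finType) (P : pred I) (c : R) :
  \sum_(i | P i) c = c * \sum_(i | P i) 1.
Proof. by rewrite big_distrr /=; apply: eq_bigr => i _; rewrite mulr1. Qed.

Lemma cauchy_schwarz (R : realType) (I : finType) (P : pred I) (f : I -> R) :
  (\sum_(i | P i) f i) ^+ 2 <= (\sum_(i | P i) 1) * \sum_(i | P i) f i ^+ 2.
Proof.
set n := \sum_(i | P i) (1 : R); set S1 := \sum_(i | P i) f i;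
set S2 := \sum_(i | P i) f i ^+ 2.
have h0 : 0 <= \sum_(i | P i) \sum_(j | P j) (f i - f j) ^+ 2.
  by apply: sumr_ge0 => i _; apply: sumr_ge0 => j _; exact: sqr_ge0.
have e : \sum_(i | P i) \sum_(j | P j) (f i - f j) ^+ 2 =
  \sum_(i | P i) (f i ^+ 2 * n + S2 - 2%:R * f i * S1).
  apply: eq_bigr => i _.
  have -> : \sum_(j | P j) (f i - f j) ^+ 2 =
     \sum_(j | P j) (f i ^+ 2 + f j ^+ 2 - 2%:R * f i * f j).
    by apply: eq_bigr => j _; ring.
  rewrite sumrB big_split /= -sum_const_n /S1 big_distrr /=.
  done.
have e2 : \sum_(i | P i) (f i ^+ 2 * n + S2 - 2%:R * f i * S1) =
   S2 * n + S2 * n - 2%:R * S1 * S1.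
  rewrite sumrB big_split /= -big_distrl /= -/S2 (sum_const_n P S2) -/n.
  by rewrite -big_distrl -big_distrr /= -/S1.
rewrite e e2 in h0.
rewrite -subr_ge0; nra.
Qed.

Section Main.
Variable R : realType.
Variable V : finType.
Variable E : rel V.
Variable m : V -> nat.
Hypothesis m_pos : forall alpha, (0 < m alpha)%N.

Local Open Scope classical_set_scope.
Local Notation X := (blowup_vertex V m).
Local Notation mR := (fun alpha => (m alpha)%:R : R).
Local Notation Pm := (Psi_m R V E mR).
Local Notation SetM := [set r : R | exists (H : hilbert R) (O : V -> H -> H) (K : V -> R),
         [/\ is_grep E O,
             \sum_(a : V) K a ^+ 2 / mR a = 1 &
             r = opnorm (fun x : H => \sum_(a : V) (K a)%:C%C *: O a x) ^+ 2]].

Lemma mR_gt0 a : 0 < mR a.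
Proof. by rewrite /= ltr0n. Qed.

Lemma mR_neq0 a : mR a != 0.
Proof. by rewrite /= pnatr_eq0 -lt0n. Qed.

Lemma sum_blowup (Z : nmodType) (F : X -> Z) :
  \sum_(x : X) F x = \sum_(a : V) \sum_(j : 'I_(m a)) F (Tagged (fun a => 'I_(m a)) j).
Proof.
rewrite (sig_big_dep (fun _ => true) (fun i (j : 'I_(m i)) => true)
   (fun i j => F (Tagged (fun a => 'I_(m a)) j))) /=.
by apply: eq_bigr => -[a j].
Qed.

Lemma grep_bnd (H : hilbert R) (O : V -> H -> H) (K : V -> R) :
  is_grep E O -> forall y, B y y <= 1 ->
  B (\sum_(a : V) (K a)%:C%C *: O a y) (\sum_(a : V) (K a)%:C%C *: O a y)
   <= #|V|%:R * \sum_a K a ^+ 2.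
Proof.
move=> [lin adj inv anti comm] y hy.
apply: le_trans (sumbound _) _.
apply: ler_wpM2l; first exact: ler0n.
apply: ler_sum => a _; rewrite BsZ B_inv //.
have := sqr_ge0 (K a); nra.
Qed.


Definition UB := #|V|%:R * \sum_a mR a.

Lemma SetM_ub r : SetM r -> r <= UB.
Proof.
move=> [H [O [K [hO hK ->]]]].
apply: opnorm_sq_le => y hy.
apply: le_trans (grep_bnd K hO hy) _.
apply: ler_wpM2l; first exact: ler0n.
apply: ler_sum => a _.
have h : K a ^+ 2 / mR a <= 1.
  rewrite -[X in _ <= X]hK.
  apply: (@term_le_sum R V (fun _ => true) (fun a => K a ^+ 2 / mR a) a) => // j _.
  by apply: divr_ge0; [exact: sqr_ge0 | exact: ltW (mR_gt0 j)].
by rewrite ler_pdivrMr ?mR_gt0 // mul1r in h.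
Qed.

Lemma SetM_ge0 r : SetM r -> 0 <= r.
Proof. by move=> [H [O [K [_ _ ->]]]]; exact: sqr_ge0. Qed.

Lemma Pm_ge0 : 0 <= Pm.
Proof.
rewrite /Psi_m; have [hs|hn] := pselect (has_sup SetM).
  have [r Sr] := hs.1.
  by apply: le_trans (SetM_ge0 Sr) (sup_upper_bound hs Sr).
by rewrite sup_out.
Qed.

Lemma le_Pm r : SetM r -> r <= Pm.
Proof.
move=> Sr; rewrite /Psi_m; apply: sup_upper_bound => //.
by split; [exists r | exists UB => x; exact: SetM_ub].
Qed.

Lemma grep_bound (H : hilbert R) (O : V -> H -> H) (K : V -> R) :
  is_grep E O -> \sum_a K a ^+ 2 / mR a <= 1 -> forall y, B y y <= 1 ->
  B (\sum_(a : V) (K a)%:C%C *: O a y) (\sum_(a : V) (K a)%:C%C *: O a y) <= Pm.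
Proof.
move=> hO hK y hy.
set rho := \sum_a K a ^+ 2 / mR a.
have hpos : forall a, 0 <= K a ^+ 2 / mR a.
  by move=> a; apply: divr_ge0; [exact: sqr_ge0 | exact: ltW (mR_gt0 a)].
have rho0 : 0 <= rho by apply: sumr_ge0 => a _; exact: hpos.
have [rhoE|rhoN] := eqVneq rho 0.
  have K0 : forall a, K a = 0.
    move=> a; have := psumr_eq0P (fun a _ => hpos a) rhoE (i := a) isT.
    move/eqP; rewrite mulf_eq0 invr_eq0 (negbTE (mR_neq0 a)) orbF sqrf_eq0.
    by move/eqP.
  rewrite big1 ?B0l ?Pm_ge0 // => a _.
  by rewrite K0 (_ : (0 : R)%:C%C = 0) // scale0r.
have rhop : 0 < rho by rewrite lt_def rhoN rho0.
set s := Num.sqrt rho.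
have sp : 0 < s by rewrite sqrtr_gt0.
have s2 : s ^+ 2 = rho by rewrite sqr_sqrtr.
set K2 := fun a => K a / s.
have hK2 : \sum_a K2 a ^+ 2 / mR a = 1.
  rewrite /K2; under eq_bigr => a _ do rewrite expr_div_n s2 mulrAC.
  by rewrite -big_distrl /= -/rho mulfV.
have eqS : \sum_(a : V) (K a)%:C%C *: O a y =
    (s%:C)%C *: \sum_(a : V) (K2 a)%:C%C *: O a y.
  rewrite scaler_sumr; apply: eq_bigr => a _.
  by rewrite scalerA -rmorphM /K2 mulrC divfK // gt_eqF.
rewrite eqS BsZ s2.
have hb := grep_bnd K2 hO.
have h1 : B (\sum_(a : V) (K2 a)%:C%C *: O a y) (\sum_(a : V) (K2 a)%:C%C *: O a y)
   <= opnorm (fun x : H => \sum_(a : V) (K2 a)%:C%C *: O a x) ^+ 2.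
  by apply: (opnorm_ge hb).
have h2 : opnorm (fun x : H => \sum_(a : V) (K2 a)%:C%C *: O a x) ^+ 2 <= Pm.
  by apply: le_Pm; exists H, O, K2.
have h3 := Bge0 (\sum_(a : V) (K2 a)%:C%C *: O a y).
have h4 := Pm_ge0.
set b := B _ _ in h1 h3 *.
set p := Pm in h2 h4 *.
set q := opnorm _ ^+ 2 in h1 h2.
have hr1 : rho <= 1 by [].
have hbp : b <= p := le_trans h1 h2.
apply: le_trans (ler_wpM2l rho0 hbp) _.
by rewrite ler_piMl.
Qed.


Lemma incl (H : hilbert R) (O : V -> H -> H) (K : V -> R) :
  is_grep E O -> \sum_(a : V) K a ^+ 2 / mR a = 1 ->
  exists (O' : X -> H -> H) (J : X -> R),
    [/\ is_grep (blowup_rel V E m) O', \sum_(x : X) J x ^+ 2 / 1 = 1 &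
      (fun z : H => \sum_(x : X) (J x)%:C%C *: O' x z) =
      (fun z : H => \sum_(a : V) (K a)%:C%C *: O a z)].
Proof.
move=> [lin adj inv anti comm] hK.
exists (fun x => O (tag x)), (fun x => K (tag x) / mR (tag x)); split.
- split.
  + by move=> x; apply: lin.
  + by move=> x; apply: adj.
  + by move=> x; apply: inv.
  + by move=> x y hxy; apply: anti.
  + move=> x y _ hxy z; have [->|ne] := eqVneq (tag x) (tag y); first by [].
    by apply: comm.
- rewrite sum_blowup -[RHS]hK; apply: eq_bigr => a _ /=.
  rewrite sumr_const card_ord divr1 -mulr_natr.
  by field; exact: mR_neq0.
- apply: funext => z; rewrite sum_blowup; apply: eq_bigr => a _ /=.
  by rewrite sumr_const card_ord scalerMnl -rmorphMn -mulr_natr divfK // mR_neq0.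
Qed.

Definition Kb (J : X -> R) a := \sum_(x : X | tag x == a) `|J x|.
Definition wb (J : X -> R) a (x : X) :=
  if Kb J a == 0 then (mR a)^-1 else `|J x| / Kb J a.
Definition Q (a : V) (x : X) := tag x == a.
Definition lam (J : X -> R) (c : {ffun V -> X}) := \prod_a wb J a (c a).

Lemma N1 a : \sum_(x : X | tag x == a) (1 : R) = mR a.
Proof.
rewrite big_mkcond /= sum_blowup /= (bigD1 a) //= eqxx sumr_const card_ord.
rewrite big1 ?addr0 // => b hb.
by rewrite big1 // => j _; rewrite (negbTE hb).
Qed.

Lemma Kb_ge0 J a : 0 <= Kb J a.
Proof. by apply: sumr_ge0 => x _; exact: normr_ge0. Qed.

Lemma W0 J a x : 0 <= wb J a x.
Proof.
rewrite /wb; case: ifP => _.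
  by rewrite invr_ge0; exact: ltW (mR_gt0 a).
by apply: divr_ge0; [exact: normr_ge0 | exact: Kb_ge0].
Qed.

Lemma W1 J a : \sum_(x : X | tag x == a) wb J a x = 1.
Proof.
rewrite /wb; have [hK|hK] := boolP (Kb J a == 0).
  by rewrite sum_const_n N1 mulVf // mR_neq0.
by rewrite -big_distrl /=; apply: mulfV.
Qed.

Lemma L1 J : \sum_(c in family Q) lam J c = 1.
Proof.
rewrite /lam -(bigA_distr_big_dep _ (fun a x => wb J a x)).
by rewrite big1 // => a _; exact: W1.
Qed.

Lemma E1 J a x :
  \sum_(c in family Q) lam J c * (c a == x)%:R = (tag x == a)%:R * wb J a x.
Proof.
pose F := fun (b : V) (z : X) => wb J b z * (if b == a then (z == x)%:R else 1).
have e : forall c : {ffun V -> X}, lam J c * (c a == x)%:R = \prod_b F b (c b).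
  move=> c; rewrite /F big_split /=; congr (_ * _).
  rewrite (bigD1 a) //= eqxx big1 ?mulr1 // => b /negbTE -> //.
under eq_bigr => c _ do rewrite e.
rewrite -(bigA_distr_big_dep _ F) (bigD1 a) //= [X in _ * X]big1 ?mulr1; last first.
  move=> b hb; rewrite /F (negbTE hb); under eq_bigr => z _ do rewrite mulr1.
  exact: W1.
rewrite /F; under eq_bigr => z _ do rewrite eqxx.
have [hx|hx] := boolP (tag x == a).
  rewrite (bigD1 x) //= eqxx mulr1 big1 ?addr0 ?mul1r // => z /andP[_ hz].
  by rewrite (negbTE hz) mulr0.
rewrite big1 ?mul0r // => z hz.
have -> : (z == x) = false by apply/negbTE; apply: contraNneq hx => <-.
by rewrite mulr0.
Qed.

Lemma C1 J z : wb J (tag z) z * (Kb J (tag z) * Num.sg (J z)) = J z.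
Proof.
have hle : `|J z| <= Kb J (tag z).
  apply: (@term_le_sum R X (fun x => tag x == tag z) (fun x => `|J x|) z) => //.
rewrite /wb; case: ifP => /eqP hK.
  have : `|J z| <= 0 by rewrite -hK.
  rewrite normr_le0 => /eqP ->; rewrite hK !mul0r mulr0 //.
rewrite mulrA divfK; last by apply/eqP.
by rewrite mulrC mulr_sg_norm.
Qed.


Lemma rho_le (J : X -> R) :
  \sum_(x : X) J x ^+ 2 / 1 = 1 -> \sum_a Kb J a ^+ 2 / mR a <= 1.
Proof.
move=> hJ.
have hJ' : \sum_(x : X) J x ^+ 2 = 1.
  by rewrite -[RHS]hJ; apply: eq_bigr => x _; rewrite divr1.
have e : \sum_(x : X) J x ^+ 2 = \sum_a \sum_(x : X | tag x == a) J x ^+ 2.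
  by rewrite (partition_big (fun x : X => tag x) (fun _ => true)).
rewrite -[X in _ <= X]hJ' e; apply: ler_sum => a _.
rewrite ler_pdivrMr ?mR_gt0 // mulrC.
have hcs := cauchy_schwarz (fun x : X => tag x == a) (fun x => `|J x|).
rewrite N1 in hcs.
have e2 : \sum_(x : X | tag x == a) `|J x| ^+ 2 = \sum_(x : X | tag x == a) J x ^+ 2.
  by apply: eq_bigr => x _; rewrite real_normK ?num_real.
by rewrite e2 in hcs.
Qed.

Lemma T1 (H : hilbert R) (O : X -> H -> H) J y :
  \sum_(c in family Q) ((lam J c)%:C)%C *:
      \sum_a ((Kb J a * Num.sg (J (c a)))%:C)%C *: O (c a) y
   = \sum_(x : X) (J x)%:C%C *: O x y.
Proof.
pose g := fun a (z : X) => ((Kb J a * Num.sg (J z))%:C)%C *: O z y.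
transitivity (\sum_(c in family Q) \sum_a ((lam J c)%:C)%C *: g a (c a)).
  by apply: eq_bigr => c _; rewrite scaler_sumr.
rewrite exchange_big /=.
transitivity (\sum_a \sum_(x : X) (((tag x == a)%:R * wb J a x)%:C)%C *: g a x).
  apply: eq_bigr => a _.
  have h : forall c : {ffun V -> X}, ((lam J c)%:C)%C *: g a (c a) =
      \sum_(x : X) ((lam J c * (c a == x)%:R)%:C)%C *: g a x.
    move=> c; rewrite (bigD1 (c a)) //= eqxx mulr1 big1 ?addr0 // => x hx.
    by rewrite eq_sym (negbTE hx) mulr0 (_ : (0:R)%:C%C = 0) // scale0r.
  under eq_bigr => c _ do rewrite h.
  rewrite exchange_big /=; apply: eq_bigr => x _.
  by rewrite -scaler_suml -rmorph_sum E1.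
rewrite exchange_big /=; apply: eq_bigr => x _.
rewrite (bigD1 (tag x)) //= eqxx mul1r big1 ?addr0; last first.
  move=> b hb; rewrite eq_sym (negbTE hb) mul0r.
  by rewrite (_ : (0:R)%:C%C = 0) // scale0r.
by rewrite /g scalerA -rmorphM C1.
Qed.

Lemma V1 (H : hilbert R) (O : X -> H -> H) J (c : {ffun V -> X}) :
  is_grep (blowup_rel V E m) O -> \sum_(x : X) J x ^+ 2 / 1 = 1 ->
  c \in family Q -> forall y, B y y <= 1 ->
  B (\sum_a ((Kb J a * Num.sg (J (c a)))%:C)%C *: O (c a) y)
    (\sum_a ((Kb J a * Num.sg (J (c a)))%:C)%C *: O (c a) y) <= Pm.
Proof.
move=> [lin adj inv anti comm] hJ /familyP hc y hy.
have tc : forall a, tag (c a) = a by move=> a; apply/eqP; exact: (hc a).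
apply: (grep_bound (O := fun a => O (c a)) (K := fun a => Kb J a * Num.sg (J (c a)))).
- split.
  + by move=> a; exact: lin.
  + by move=> a; exact: adj.
  + by move=> a; exact: inv.
  + by move=> a b hab x; apply: anti; rewrite /blowup_rel !tc.
  + move=> a b hab hE x; apply: comm.
      by apply: contra_neq hab => h; rewrite -(tc a) -(tc b) h.
    by rewrite /blowup_rel !tc.
- apply: le_trans (rho_le hJ); apply: ler_sum => a _.
  rewrite exprMn sqr_sg; case: (J (c a) != 0) => /=; first by rewrite mulr1.
  rewrite mulr0 mul0r; apply: divr_ge0; [exact: sqr_ge0 | exact: ltW (mR_gt0 a)].
- exact: hy.
Qed.

Lemma core (H : hilbert R) (O : X -> H -> H) J :
  is_grep (blowup_rel V E m) O -> \sum_(x : X) J x ^+ 2 / 1 = 1 ->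
  forall y, B y y <= 1 ->
  B (\sum_(x : X) (J x)%:C%C *: O x y) (\sum_(x : X) (J x)%:C%C *: O x y) <= Pm.
Proof.
move=> hO hJ y hy.
rewrite -(T1 O J y).
have hl : forall c, c \in family Q -> 0 <= lam J c.
  by move=> c _; apply: prodr_ge0 => a _; exact: W0.
apply: le_trans (jensen (P := fun c => c \in family Q) (l := lam J)
   (fun c => \sum_a ((Kb J a * Num.sg (J (c a)))%:C)%C *: O (c a) y) hl (L1 J)) _.
apply: le_trans (_ : _ <= \sum_(c in family Q) lam J c * Pm) _.
  apply: ler_sum => c hc; apply: ler_wpM2l; first exact: hl.
  exact: V1.
by rewrite -big_distrl /= L1 mul1r.
Qed.


Lemma main_eq : Psi R X (blowup_rel V E m) = Pm.
Proof.
rewrite /Psi {1}/Psi_m.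
set ST := [set r : R | _].
have hT : forall r, ST r -> r <= Pm.
  move=> r [H [O [J [hO hJ ->]]]]; apply: opnorm_sq_le => y hy.
  exact: core.
have hT0 : forall r, ST r -> 0 <= r.
  by move=> r [H [O [J [_ _ ->]]]]; exact: sqr_ge0.
have hsupT0 : 0 <= sup ST.
  have [hs|hn] := pselect (has_sup ST); last by rewrite sup_out.
  have [r Sr] := hs.1.
  exact: le_trans (hT0 r Sr) (sup_upper_bound hs Sr).
apply/eqP; rewrite eq_le; apply/andP; split.
  have [hne|hn] := pselect (ST !=set0).
    by apply: ge_sup => // r Sr; exact: hT.
  by rewrite sup_out ?Pm_ge0 // => -[].
have hMT : forall r, SetM r -> ST r.
  move=> r [H [O [K [hO hK ->]]]].
  have [O' [J [hO' hJ heq]]] := incl hO hK.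
  by exists H, O', J; split => //; rewrite heq.
rewrite {1}/Psi_m.
have [hne|hn] := pselect (SetM !=set0).
  apply: ge_sup => // r Sr.
  apply: sup_upper_bound; last exact: hMT.
  by split; [exists r; exact: hMT | exists Pm => x; exact: hT].
by rewrite sup_out // => -[].
Qed.

End Main.

Theorem mainTheorem7 (R : realType) (V : finType) (E : rel V)
  (Esym : symmetric E) (Eirr : irreflexive E)
  (m : V -> nat) (m_pos : forall alpha, (0 < m alpha)%N) :
  Psi R (blowup_vertex V m) (blowup_rel V E m) = Psi_m R V E (fun alpha => (m alpha)%:R).
Proof. exact: main_eq. Qed.
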